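(* Let $\mathcal{K}$ be a continuous unitary representation of $\overline{\mathfrak{S}}_\infty$ in a Hilbert space $\mathcal{H}$, and let $n\geq 0$ be an integer. Then the sequence of operators $\{\mathcal{K}({}^n\sigma_m)\}_{m\in\mathbb{N}}$ converges in the weak operator topology to a self-adjoint operator $P_n$.
   Context: $\overline{\mathfrak{S}}_\infty$ is the group of all bijections of $\mathbb{N}=\{1,2,\dots\}$, with the Polish group topology in which the subgroups $\mathfrak{S}(n,\infty)=\{s\in\overline{\mathfrak{S}}_\infty: s(k)=k \text{ for } k=1,\dots,n\}$ form a fundamental system of neighborhoods of the identity; continuity of $\mathcal{K}$ means continuity into the unitary group with the strong operator topology, i.e. for each $\eta\in\mathcal{H}$, $\lim_{k\to\infty}\sup_{s\in\mathfrak{S}(k,\infty)}\|\mathcal{K}(s)\eta-\eta\|=0$. For $k\ne j$, $(k\;j)$ denotes the transposition interchanging $k$ and $j$. Define ${}^n\sigma_m=(n+1\;\;n+m+1)(n+2\;\;n+m+2)\cdots(n+m\;\;n+2m)$. *)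

(* Defs.v *)
From mathcomp Require Import all_boot all_order all_algebra.
From mathcomp Require Import reals.
From mathcomp.real_closed Require Import complex.
Set Implicit Arguments. Unset Strict Implicit. Unset Printing Implicit Defensive.
Import Order.TTheory GRing.Theory Num.Theory.
Local Open Scope ring_scope.

(* The group of all bijections of N = {1,2,...}: we model a bijection of
   {1,2,...} as a bijection s of nat with s 0 = 0 (0 is a dummy point);
   points k >= 1 are the genuine elements of N. *)
Definition is_perm_inf (s : nat -> nat) : Prop := bijective s /\ s 0%N = 0%N.

Definition fixes_upto (n : nat) (s : nat -> nat) : Prop :=
  forall k : nat, (1 <= k <= n)%N -> s k = k.

Definition transp (k j : nat) (x : nat) : nat :=
  if x == k then j else if x == j then k else x.

(* ^n sigma_m = (n+1 n+m+1)(n+2 n+m+2)...(n+m n+2m) *)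
Definition sigma (n m : nat) (x : nat) : nat :=
  if (n + 1 <= x <= n + m)%N then (x + m)%N
  else if (n + m + 1 <= x <= n + 2 * m)%N then (x - m)%N
  else x.

Section Hilbert.
Variables (R : realType) (H : lmodType R[i]) (ip : H -> H -> R[i]).

Definition hnorm (x : H) : R := Num.sqrt (complex.Re (ip x x)).

Definition is_hilbert : Prop :=
  [/\ (forall (a : R[i]) (x y z : H), ip (a *: x + y) z = a * ip x z + ip y z),
      (forall x y : H, ip y x = conjc (ip x y)),
      (forall x : H, 0 <= complex.Re (ip x x) /\ complex.Im (ip x x) = 0),
      (forall x : H, ip x x = 0 -> x = 0) &
      (forall u : nat -> H,
         (forall e : R, 0 < e -> exists N : nat, forall p q : nat,
              (N <= p)%N -> (N <= q)%N -> hnorm (u p - u q) < e) ->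
         exists l : H, forall e : R, 0 < e -> exists N : nat, forall p : nat,
              (N <= p)%N -> hnorm (u p - l) < e)].

Definition lin_op (T : H -> H) : Prop :=
  forall (a : R[i]) (x y : H), T (a *: x + y) = a *: T x + T y.

Definition bounded_op (T : H -> H) : Prop :=
  exists c : R, forall x : H, hnorm (T x) <= c * hnorm x.

Definition unitary (U : H -> H) : Prop :=
  [/\ lin_op U, (forall x y : H, ip (U x) (U y) = ip x y) &
      (forall y : H, exists x : H, U x = y)].

Definition self_adjoint (T : H -> H) : Prop :=
  lin_op T /\ bounded_op T /\ (forall x y : H, ip (T x) y = ip x (T y)).

Definition unitary_rep (K : (nat -> nat) -> H -> H) : Prop :=
  [/\ (forall s, is_perm_inf s -> unitary (K s)),
      (forall x : H, K id x = x) &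
      (forall s t, is_perm_inf s -> is_perm_inf t ->
         forall x : H, K (s \o t) x = K s (K t x))].

Definition rep_continuous (K : (nat -> nat) -> H -> H) : Prop :=
  forall (eta : H) (e : R), 0 < e -> exists k : nat, forall s,
    is_perm_inf s -> fixes_upto k s -> hnorm (K s eta - eta) <= e.

Definition ccvg (z : nat -> R[i]) (l : R[i]) : Prop :=
  forall e : R, 0 < e -> exists N : nat, forall m : nat,
    (N <= m)%N -> ComplexField.Normc.normc (z m - l) < e.

Definition wot_cvg (A : nat -> H -> H) (T : H -> H) : Prop :=
  forall xi eta : H, ccvg (fun m => ip (A m xi) eta) (ip (T xi) eta).

End Hilbert.

(* Main.v *)
Require Import Defs.
From mathcomp Require Import all_boot all_order all_algebra.
From mathcomp Require Import reals.
From mathcomp.real_closed Require Import complex.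
From mathcomp Require Import zify ring lra.
From mathcomp Require Import classical_sets.
From Stdlib Require Import FunctionalExtensionality ClassicalEpsilon.
Set Implicit Arguments. Unset Strict Implicit. Unset Printing Implicit Defensive.
Import Order.TTheory GRing.Theory Num.Theory.
Local Open Scope ring_scope.
Local Open Scope complex_scope.

Module p1.
Lemma ReM (R : rcfType) (a b : R[i]) : complex.Re (a * b) = complex.Re a * complex.Re b - complex.Im a * complex.Im b.
Proof. by case: a => ? ?; case: b => ? ?. Qed.
Lemma ImM (R : rcfType) (a b : R[i]) : complex.Im (a * b) = complex.Re a * complex.Im b + complex.Im a * complex.Re b.
Proof. by case: a => ? ?; case: b => ? ? /=. Qed.
Lemma ReD (R : rcfType) (a b : R[i]) : complex.Re (a + b) = complex.Re a + complex.Re b.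
Proof. by case: a => ? ?; case: b => ? ?. Qed.
Lemma ReJ (R : rcfType) (a : R[i]) : complex.Re (conjc a) = complex.Re a.
Proof. by case: a. Qed.
Lemma ImJ (R : rcfType) (a : R[i]) : complex.Im (conjc a) = - complex.Im a.
Proof. by case: a. Qed.
Lemma ReC (R : rcfType) (r : R) : complex.Re (r%:C) = r. Proof. by []. Qed.
Lemma ImC (R : rcfType) (r : R) : complex.Im (r%:C) = 0. Proof. by []. Qed.
Lemma Rei (R : rcfType) : complex.Re ('i : R[i]) = 0. Proof. by []. Qed.
Lemma Imi (R : rcfType) : complex.Im ('i : R[i]) = 1. Proof. by []. Qed.
Lemma ReN (R : rcfType) (a : R[i]) : complex.Re (- a) = - complex.Re a.
Proof. by case: a. Qed.
Lemma ImN (R : rcfType) (a : R[i]) : complex.Im (- a) = - complex.Im a.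
Proof. by case: a. Qed.
Lemma ImD (R : rcfType) (a b : R[i]) : complex.Im (a + b) = complex.Im a + complex.Im b.
Proof. by case: a => ? ?; case: b => ? ?. Qed.
Lemma Re0 (R : rcfType) : complex.Re (0 : R[i]) = 0. Proof. by []. Qed.
Lemma Im0 (R : rcfType) : complex.Im (0 : R[i]) = 0. Proof. by []. Qed.
Lemma complex_ext (R : rcfType) (a b : R[i]) : complex.Re a = complex.Re b -> complex.Im a = complex.Im b -> a = b.
Proof. by case: a => ? ?; case: b => ? ? /= -> ->. Qed.

Lemma conjcD (R : rcfType) (a b : R[i]) : conjc (a + b) = conjc a + conjc b.
Proof. by case: a => ? ?; case: b => ? ? /=; rewrite opprD. Qed.
Lemma conjcM (R : rcfType) (a b : R[i]) : conjc (a * b) = conjc a * conjc b.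
Proof. by apply: complex_ext; rewrite ?ReM ?ImM ?ReJ ?ImJ ?ReM ?ImM; lra. Qed.
Lemma conjcN (R : rcfType) (a : R[i]) : conjc (- a) = - conjc a.
Proof. by case: a => ? ? /=. Qed.
Lemma conjc00 (R : rcfType) : conjc (0 : R[i]) = 0.
Proof. by apply: complex_ext; rewrite ?ReJ ?ImJ /= ?oppr0. Qed.

Section IP.
Variables (R : realType) (H : lmodType R[i]) (ip : H -> H -> R[i]).
Hypothesis hH : is_hilbert ip.

Local Notation Re := complex.Re.
Local Notation Im := complex.Im.
Definition Q (x : H) : R := Re (ip x x).

Lemma ipDZl a x y z : ip (a *: x + y) z = a * ip x z + ip y z.
Proof. by case: hH. Qed.
Lemma ipC x y : ip y x = conjc (ip x y).
Proof. by case: hH. Qed.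
Lemma ip0l z : ip 0 z = 0.
Proof.
have := ipDZl 1 0 0 z; rewrite scaler0 addr0 mul1r => h.
by apply: (addrI (ip 0 z)); rewrite addr0 -h.
Qed.
Lemma ipDl x y z : ip (x + y) z = ip x z + ip y z.
Proof. by have := ipDZl 1 x y z; rewrite scale1r mul1r. Qed.
Lemma ipZl a x z : ip (a *: x) z = a * ip x z.
Proof. by have := ipDZl a x 0 z; rewrite addr0 ip0l addr0. Qed.
Lemma ipNl x z : ip (- x) z = - ip x z.
Proof. by rewrite -scaleN1r ipZl mulN1r. Qed.
Lemma ipDr x y z : ip z (x + y) = ip z x + ip z y.
Proof. by rewrite ipC ipDl conjcD -!ipC. Qed.
Lemma ipZr a x z : ip z (a *: x) = conjc a * ip z x.
Proof. by rewrite ipC ipZl conjcM -!ipC. Qed.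
Lemma ipNr x z : ip z (- x) = - ip z x.
Proof. by rewrite -scaleN1r ipZr conjcN conjc1 mulN1r. Qed.
Lemma ip0r z : ip z 0 = 0.
Proof. by rewrite ipC ip0l conjc00. Qed.
Lemma ReipC x y : Re (ip y x) = Re (ip x y).
Proof. by rewrite ipC ReJ. Qed.
Lemma Q_ge0 x : 0 <= Q x.
Proof. by case: hH => _ _ /(_ x) []. Qed.
Lemma Q_eq0 x : Q x = 0 -> x = 0.
Proof.
case: hH => _ _ /(_ x) [_ hi] hd _ hq; apply: hd; apply: complex_ext => //.
Qed.
Lemma ReZl (r : R) x y : Re (ip (r%:C *: x) y) = r * Re (ip x y).
Proof. by rewrite ipZl ReM ReC ImC mul0r subr0. Qed.
Lemma ReZr (r : R) x y : Re (ip x (r%:C *: y)) = r * Re (ip x y).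
Proof. by rewrite ReipC ReZl ReipC. Qed.
Lemma QD x y : Q (x + y) = Q x + 2 * Re (ip x y) + Q y.
Proof.
rewrite /Q ipDl !ipDr !ReD (ReipC x y); lra.
Qed.
Lemma QZ (r : R) x : Q (r%:C *: x) = r ^+ 2 * Q x.
Proof. by rewrite /Q ReZl ReZr mulrA expr2. Qed.
Lemma QN x : Q (- x) = Q x.
Proof. by rewrite /Q ipNl ipNr opprK. Qed.

Lemma hnorm_ge0 x : 0 <= hnorm ip x.
Proof. exact: sqrtr_ge0. Qed.
Lemma hnorm_sqr x : hnorm ip x ^+ 2 = Q x.
Proof. by rewrite /hnorm sqr_sqrtr // Q_ge0. Qed.

Lemma CS x y : Re (ip x y) <= hnorm ip x * hnorm ip y.
Proof.
have [->|xn0] := eqVneq x 0; first by rewrite ip0l Re0 mulr_ge0 // hnorm_ge0.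
have [->|yn0] := eqVneq y 0; first by rewrite ip0r Re0 mulr_ge0 // hnorm_ge0.
set a := hnorm ip x; set b := hnorm ip y.
have ha : 0 < a.
  rewrite lt_neqAle hnorm_ge0 andbT; apply/eqP => h.
  by move: xn0; rewrite (Q_eq0 (x:=x)) ?eqxx // -hnorm_sqr -/a -h expr2 mul0r.
have hb : 0 < b.
  rewrite lt_neqAle hnorm_ge0 andbT; apply/eqP => h.
  by move: yn0; rewrite (Q_eq0 (x:=y)) ?eqxx // -hnorm_sqr -/b -h expr2 mul0r.
have := Q_ge0 (b%:C *: x + (- a)%:C *: y).
rewrite QD !QZ ReZl ReZr -!hnorm_sqr -/a -/b => h.
have hab : 0 < a * b by rewrite mulr_gt0.
nra.
Qed.
Lemma CSabs x y : `|Re (ip x y)| <= hnorm ip x * hnorm ip y.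
Proof.
rewrite ler_norml CS andbT.
have := CS (- x) y; rewrite ipNl ReN /hnorm /Q ipNl ipNr opprK; lra.
Qed.
Lemma hnormD x y : hnorm ip (x + y) <= hnorm ip x + hnorm ip y.
Proof.
have := hnorm_ge0 (x + y); have := hnorm_sqr (x + y); rewrite QD -!hnorm_sqr.
have := CS x y; have := hnorm_ge0 x; have := hnorm_ge0 y. nra.
Qed.
End IP.
End p1.
Import p1.

Module p2.

Section RCVG.
Variable R : realType.
Definition rcvg (u : nat -> R) (l : R) := forall e : R, 0 < e ->
  exists N : nat, forall m : nat, (N <= m)%N -> `|u m - l| < e.

Lemma rcvg_uniq u l l' : rcvg u l -> rcvg u l' -> l = l'.
Proof.
move=> h h'; apply/eqP; rewrite -subr_eq0 -normr_le0; apply/ler_addgt0Pr => e he.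
rewrite add0r.
have he2 : 0 < e / 2 by rewrite divr_gt0.
have [N hN] := h _ he2; have [N' hN'] := h' _ he2.
have := hN (maxn N N') (leq_maxl _ _); have := hN' (maxn N N') (leq_maxr _ _).
set v := u _ => h1 h2.
move: h1 h2; rewrite !ltr_norml ler_norml; lra.
Qed.

Lemma rcvg_lin (a b : R) u v l l' : rcvg u l -> rcvg v l' ->
  rcvg (fun m => a * u m + b * v m) (a * l + b * l').
Proof.
move=> h h' e he.
have hc : 0 < e / (2 * (`|a| + `|b| + 1)).
  by rewrite divr_gt0 // mulr_gt0 // ltr_wpDl // addr_ge0.
have [N hN] := h _ hc; have [N' hN'] := h' _ hc.
exists (maxn N N') => m hm.
have h1 := hN m (leq_trans (leq_maxl _ _) hm).
have h2 := hN' m (leq_trans (leq_maxr _ _) hm).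
set c := e / _ in hc h1 h2.
have -> : a * u m + b * v m - (a * l + b * l') = a * (u m - l) + b * (v m - l') by ring.
apply: (le_lt_trans (ler_normD _ _)); rewrite !normrM.
have ha := normr_ge0 a; have hb := normr_ge0 b.
have e1 : `|a| * `|u m - l| <= `|a| * c by rewrite ler_wpM2l // ltW.
have e2 : `|b| * `|v m - l'| <= `|b| * c by rewrite ler_wpM2l // ltW.
have ec : (`|a| + `|b| + 1) * c = e / 2.
  have hA : (`|a| + `|b| + 1) != 0 by rewrite gt_eqF // ltr_wpDl // addr_ge0.
  by rewrite /c; field; rewrite hA.
nra.
Qed.

Lemma rcvg_ext u v l : (forall m, u m = v m) -> rcvg u l -> rcvg v l.
Proof. by move=> huv h e he; have [N hN] := h e he; exists N => m; rewrite -huv; apply: hN. Qed.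

Lemma rcvg_le u l c : (forall m, u m <= c) -> rcvg u l -> l <= c.
Proof.
move=> hu h; apply/ler_addgt0Pr => e he.
have [N hN] := h e he; have := hN N (leqnn _); have := hu N.
rewrite ltr_norml; lra.
Qed.

Lemma rcvg_cauchy (u : nat -> R) :
  (forall e : R, 0 < e -> exists N : nat, forall p q : nat, (N <= p)%N -> (N <= q)%N ->
     `|u p - u q| < e) -> exists l, rcvg u l.
Proof.
move=> hc.
have [N0 hN0] := hc 1 ltr01.
pose S := (fun x : R => exists N : nat, forall p, (N <= p)%N -> x <= u p).
have Sne : nonempty S.
  exists (u N0 - 1), N0 => p hp; have := hN0 p N0 hp (leqnn _); rewrite ltr_norml; lra.
have Sub : has_ubound S.
  exists (u N0 + 1) => x [N hN]; have := hN (maxn N N0) (leq_maxl _ _).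
  have := hN0 (maxn N N0) N0 (leq_maxr _ _) (leqnn _); rewrite ltr_norml; lra.
exists (sup S) => e he.
have he2 : 0 < e / 2 by rewrite divr_gt0.
have [N hN] := hc _ he2; exists N => m hm.
have l1 : u m - e / 2 <= sup S.
  apply: sup_upper_bound; first by split.
  exists N => p hp; have := hN p m hp hm; rewrite ltr_norml; lra.
have l2 : sup S <= u m + e / 2.
  apply: ge_sup => // x [N' hN']; have := hN' (maxn N N') (leq_maxr _ _).
  have := hN (maxn N N') m (leq_maxl _ _) hm; rewrite ltr_norml; lra.
rewrite ltr_norml; lra.
Qed.
End RCVG.
End p2.
Import p2.

Module p3.
Ltac dif := repeat match goal with
 | |- context[if ?b then _ else _] =>
   lazymatch b with
   | context[if _ then _ else _] => fail
   | true => fail | false => fail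
   | _ => let E := fresh "E" in destruct b eqn:E; cbv beta iota
   end
 end; try lia.

Definition swapb (a d k : nat) (x : nat) : nat :=
  if (a < x <= a + k)%N then (x + d)%N
  else if (a + d < x <= a + d + k)%N then (x - d)%N else x.

Lemma swapb_inv a d k x : (k <= d)%N -> swapb a d k (swapb a d k x) = x.
Proof. move=> hk; rewrite /swapb; dif. Qed.

Lemma swapb_perm a d k : (k <= d)%N -> is_perm_inf (swapb a d k).
Proof.
move=> hk; split; last by rewrite /swapb; dif.
by exists (swapb a d k) => x; apply: swapb_inv.
Qed.

Lemma sigma_swapb n m x : sigma n m x = swapb n m m x.
Proof. rewrite /sigma /swapb; dif. Qed.

Lemma swapb_low a d k x : (x <= a)%N -> swapb a d k x = x.
Proof. move=> hx; rewrite /swapb; dif. Qed.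

Lemma sigma_inv n m x : sigma n m (sigma n m x) = x.
Proof. by rewrite !sigma_swapb swapb_inv. Qed.

Lemma sigma_perm n m : is_perm_inf (sigma n m).
Proof.
split; first by exists (sigma n m) => x; apply: sigma_inv.
by rewrite sigma_swapb /swapb; dif.
Qed.

Lemma perm_comp s t : is_perm_inf s -> is_perm_inf t -> is_perm_inf (s \o t).
Proof. by move=> [bs s0] [bt t0]; split; [apply: bij_comp | rewrite /= t0 s0]. Qed.

Lemma tfix n k m M : (k <= m)%N -> (m + k <= M)%N ->
  fixes_upto (n + k) (sigma n m \o swapb (n + m) (M - m) k \o sigma n M).
Proof.
move=> h1 h2 x hx /=; rewrite !sigma_swapb /swapb.
move/andP: hx => [hx1 hx2].
dif.
Qed.

Lemma sigma_decomp n k m M x : (k <= m)%N -> (m + k <= M)%N ->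
  sigma n M x = swapb (n + m) (M - m) k (sigma n m
     ((sigma n m \o swapb (n + m) (M - m) k \o sigma n M) x)).
Proof.
move=> h1 h2 /=; rewrite sigma_inv swapb_inv ?sigma_inv //; lia.
Qed.
End p3.
Import p3.

Module p4.

Section Rep.
Variables (R : realType) (H : lmodType R[i]) (ip : H -> H -> R[i]).
Hypothesis hH : is_hilbert ip.
Variable K : (nat -> nat) -> H -> H.
Hypothesis hK : unitary_rep ip K.
Local Notation Re := complex.Re.
Local Notation hn := (hnorm ip).

Lemma Kunit s : is_perm_inf s -> unitary ip (K s).
Proof. by case: hK => h _ _; apply: h. Qed.
Lemma KD s x y : is_perm_inf s -> K s (x + y) = K s x + K s y.
Proof. by move=> /Kunit [hl _ _]; have := hl 1 x y; rewrite !scale1r. Qed.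
Lemma K0 s : is_perm_inf s -> K s 0 = 0.
Proof.
move=> hs; have := KD 0 0 hs; rewrite addr0 => h.
by apply: (addrI (K s 0)); rewrite addr0 -h.
Qed.
Lemma KZ s a x : is_perm_inf s -> K s (a *: x) = a *: K s x.
Proof. by move=> hs; have [hl _ _] := Kunit hs; have := hl a x 0; rewrite addr0 (K0 hs) addr0. Qed.
Lemma KN s x : is_perm_inf s -> K s (- x) = - K s x.
Proof. by move=> hs; rewrite -scaleN1r KZ // scaleN1r. Qed.
Lemma KB s x y : is_perm_inf s -> K s (x - y) = K s x - K s y.
Proof. by move=> hs; rewrite KD // KN. Qed.
Lemma Kip s x y : is_perm_inf s -> ip (K s x) (K s y) = ip x y.
Proof. by move=> /Kunit [_ h _]. Qed.
Lemma Khn s x : is_perm_inf s -> hn (K s x) = hn x.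
Proof. by move=> hs; rewrite /hnorm Kip. Qed.
Lemma Kcomp s t x : is_perm_inf s -> is_perm_inf t -> K (s \o t) x = K s (K t x).
Proof. by move=> hs ht; case: hK => _ _ h; apply: h. Qed.
Lemma Kid x : K id x = x.
Proof. by case: hK. Qed.

Lemma Kadj s x y : is_perm_inf s -> (forall z, s (s z) = z) ->
  ip (K s x) y = ip x (K s y).
Proof.
move=> hs hss.
have hy : K s (K s y) = y.
  rewrite -Kcomp //; have -> : s \o s = id by apply: functional_extensionality => z /=.
  by rewrite Kid.
by rewrite -{1}hy Kip.
Qed.

Lemma ipBl x y z : ip (x - y) z = ip x z - ip y z.
Proof. by rewrite ipDl // ipNl. Qed.
Lemma ipBr x y z : ip z (x - y) = ip z x - ip z y.
Proof. by rewrite ipDr // ipNr. Qed.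

Lemma fixes_mono N N' s : fixes_upto N s -> (N' <= N)%N -> fixes_upto N' s.
Proof. by move=> h hN k /andP [h1 h2]; apply: h; rewrite h1 (leq_trans h2). Qed.

Lemma est n xi eta (e : R) : rep_continuous ip K -> 0 < e -> exists k : nat,
  forall m M, (k <= m)%N -> (m + k <= M)%N ->
  `|Re (ip (K (sigma n M) xi) eta) - Re (ip (K (sigma n m) xi) eta)|
     <= e * (hn xi + hn eta).
Proof.
move=> hc he.
have [k1 hk1] := hc xi e he; have [k2 hk2] := hc eta e he.
exists (maxn k1 k2) => m M hm hM.
set k := maxn k1 k2 in hm hM.
set s' := swapb (n + m) (M - m) k.
set t := sigma n m \o s' \o sigma n M.
have hkd : (k <= M - m)%N by lia.
have ps' : is_perm_inf s' by apply: swapb_perm.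
have pt : is_perm_inf t by apply: perm_comp; [apply: perm_comp => //; apply: sigma_perm | apply: sigma_perm].
have pm := sigma_perm n m.
have hdec : sigma n M = s' \o (sigma n m \o t).
  by apply: functional_extensionality => x /=; apply: sigma_decomp.
have ht : hn (K t xi - xi) <= e.
  apply: hk1 => //; have := tfix (n:=n) hm hM; rewrite -/s' -/t => h.
  apply: fixes_mono h _; lia.
have hs : hn (K s' eta - eta) <= e.
  apply: hk2 => //; move=> x /andP [_ hx]; rewrite /s' swapb_low //; lia.
rewrite hdec Kcomp //; last by apply: perm_comp.
rewrite Kcomp // Kadj //; last by move=> z; rewrite /s' swapb_inv.
set X := K (sigma n m) (K t xi); set Y := K (sigma n m) xi; set Z := K s' eta.
have -> : ip X Z = ip Y eta + ip (K (sigma n m) (K t xi - xi)) Z + ip Y (Z - eta).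
  by rewrite KB // -/X -/Y ipBl ipBr; ring.
rewrite !ReD.
have h1 := CSabs hH (K (sigma n m) (K t xi - xi)) Z.
have h2 := CSabs hH Y (Z - eta).
rewrite /Z /Y !Khn // in h1 h2.
have g1 := hnorm_ge0 ip xi; have g2 := hnorm_ge0 ip eta.
have g3 := hnorm_ge0 ip (K t xi - xi); have g4 := hnorm_ge0 ip (K s' eta - eta).
move: h1 h2; rewrite !ler_norml.
set A := Re (ip _ Z); set B := Re (ip Y _) .
nra.
Qed.
End Rep.
End p4.
Import p4.

Module p5.

Lemma exN (R : realType) (r : R) : 0 < r -> exists N : nat, forall p : nat, (N <= p)%N -> (p.+1%:R)^-1 < r.
Proof.
move=> hr; have hr' : 0 <= r^-1 by rewrite invr_ge0 ltW.
exists (Num.Def.archi_bound r^-1) => p hp.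
rewrite invf_plt ?posrE //; apply: (lt_le_trans (archi_boundP hr')).
by rewrite ler_nat; apply: leq_trans hp _.
Qed.

Section Riesz.
Variables (R : realType) (H : lmodType R[i]) (ip : H -> H -> R[i]).
Hypothesis hH : is_hilbert ip.
Local Notation Re := complex.Re.
Local Notation hn := (hnorm ip).
Local Notation Q := (Q ip).

Lemma hn_le1 x : (hn x <= 1) = (Q x <= 1).
Proof.
have := hnorm_ge0 ip x; have := hnorm_sqr hH x => h1 h2.
apply/idP/idP => h; nra.
Qed.

Lemma hn_bound y : hn y <= (1 + Q y) / 2.
Proof.
have := hnorm_sqr hH y => h1.
have := sqr_ge0 (hn y - 1); rewrite sqrrB h1 expr1n mulr1; lra.
Qed.

Lemma QB x y : Q (x - y) = Q x - 2 * Re (ip x y) + Q y.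
Proof. rewrite (QD hH) (QN hH) (ipNr hH) ReN. lra. Qed.

Lemma riesz (g : H -> R) (C : R) :
 (forall x y, g (x + y) = g x + g y) ->
 (forall (r : R) x, g (r%:C *: x) = r * g x) ->
 (forall x, g x <= C * hn x) ->
 exists z, forall y, g y = Re (ip z y).
Proof.
move=> gD gZ gC.
have g0 : g 0 = 0.
  have := gD 0 0; rewrite addr0 => h; apply: (addrI (g 0)); by rewrite addr0 -h.
have gN x : g (- x) = - g x.
  have := gD x (- x); rewrite subrr g0 => h; apply: (addrI (g x)); by rewrite subrr -h.
pose S := (fun r : R => exists x, Q x <= 1 /\ r = g x).
have Sne : nonempty S by exists 0, 0; split; [rewrite /p1.Q ip0l // Re0 ler01 | by rewrite g0].
have Sub : has_ubound S.
  exists `|C| => r [x [hx ->]]; have := gC x; rewrite -hn_le1 in hx.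
  have := hnorm_ge0 ip x; have := normr_ge0 C; have := ler_norm C. nra.
have hsup : has_sup S by split.
set s := sup S.
have s0 : 0 <= s by apply: sup_upper_bound => //; exists 0; split; [rewrite /p1.Q ip0l // Re0 ler01 | by rewrite g0].
have gle x : g x <= s * hn x.
  have [hx0|hxp] := eqVneq (hn x) 0.
    have : Q x = 0 by rewrite -(hnorm_sqr hH x) hx0 expr2 mul0r.
    by move/(Q_eq0 hH) => ->; rewrite g0 mulr_ge0 // hnorm_ge0.
  set r := hn x in hxp *.
  have rp : 0 < r by rewrite lt_neqAle eq_sym hxp hnorm_ge0.
  have h1 : S (g (r^-1%:C *: x)).
    exists (r^-1%:C *: x); split => //.
    by rewrite (QZ hH) -(hnorm_sqr hH x) -/r exprVn mulVf // expf_neq0 // lt0r_neq0.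
  have := sup_upper_bound hsup h1; rewrite -/s gZ => h2.
  rewrite -[g x](mulVKf (lt0r_neq0 rp)) [s * r]mulrC.
  by rewrite ler_wpM2l // ltW.
have [s00|sp] := eqVneq s 0.
  exists 0 => y; rewrite ip0l // Re0.
  have := gle y; have := gle (- y); rewrite gN s00 !mul0r; lra.
have {sp}sp : 0 < s by rewrite lt_neqAle eq_sym sp s0.
have hex j : exists x, Q x <= 1 /\ s - (j.+1%:R)^-1 < g x.
  have hj : 0 < (j.+1%:R : R)^-1 by rewrite invr_gt0 ltr0n.
  have [_ [x [hx ->]] hlt] := sup_adherent hj hsup.
  by exists x.
pose xs j := epsilon (inhabits 0) (fun x => Q x <= 1 /\ s - (j.+1%:R)^-1 < g x).
have hxs j : Q (xs j) <= 1 /\ s - (j.+1%:R)^-1 < g (xs j) := epsilon_spec _ _ (hex j).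
have key p q : s * Q (xs p - xs q) <= 4 * ((p.+1%:R)^-1 + (q.+1%:R)^-1).
  have [ha hga] := hxs p; have [hb hgb] := hxs q.
  set a := xs p in ha hga *; set b := xs q in hb hgb *.
  set ep := (p.+1%:R : R)^-1 in hga *; set eq := (q.+1%:R : R)^-1 in hgb *.
  have hep : 0 < ep by rewrite invr_gt0 ltr0n.
  have heq : 0 < eq by rewrite invr_gt0 ltr0n.
  have par : Q (a - b) + Q (a + b) = 2 * Q a + 2 * Q b by rewrite QB (QD hH); lra.
  have h1 := gle (a + b); rewrite gD in h1.
  have hq := Q_ge0 hH (a - b).
  have hq2 := Q_ge0 hH (a + b).
  have hh := hnorm_sqr hH (a + b); have hh0 := hnorm_ge0 ip (a + b).
  set h := hn (a + b) in h1 hh hh0.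
  have h2 : h <= 2 by nra.
  have h3 : 2 * s - s * h <= ep + eq by lra.
  have h4 : s * Q (a - b) <= s * (4 - h ^+ 2) by rewrite hh ler_wpM2l; lra.
  have h5 : s * (4 - h ^+ 2) = (2 * s - s * h) * (2 + h) by ring.
  have h6 : (2 * s - s * h) * (2 + h) <= (ep + eq) * (2 + h) by rewrite ler_wpM2r //; lra.
  nra.
have cauchy : forall e : R, 0 < e -> exists N : nat, forall p q : nat,
    (N <= p)%N -> (N <= q)%N -> hn (xs p - xs q) < e.
  move=> e he.
  have hr : 0 < e ^+ 2 * s / 8 by rewrite divr_gt0 // mulr_gt0 // exprn_gt0.
  have [N hN] := exN hr; exists N => p q hp hq.
  have := hN p hp; have := hN q hq; have := key p q.
  have := hnorm_sqr hH (xs p - xs q); have := hnorm_ge0 ip (xs p - xs q).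
  set h := hn _; set r := e ^+ 2 * s / 8.
  move=> h0 hsq hk hq' hp'.
  have : s * Q (xs p - xs q) < s * e ^+ 2.
    rewrite /r [e ^+ 2 * s]mulrC in hq' hp'.
    set X := s * e ^+ 2 in hq' hp' *; set Y := s * Q _ in hk *.
    set A := (p.+1%:R : R)^-1 in hk hp'; set B := (q.+1%:R : R)^-1 in hk hq'; lra.
  rewrite ltr_pM2l // -hsq => hlt.
  nra.
have [_ _ _ _ hcomp] := hH.
have [x0 hx0] := hcomp xs cauchy.
have hnN x : hn (- x) = hn x by rewrite /hnorm -/(p1.Q ip (- x)) (QN hH).
have Qx0 : Q x0 <= 1.
  rewrite -hn_le1; apply/ler_addgt0Pr => e he.
  have [N hN] := hx0 e he; have := hN N (leqnn _).
  have := hnormD hH (xs N) (x0 - xs N); rewrite addrC subrK.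
  rewrite -opprB hnN; have := (hxs N).1; rewrite -hn_le1; lra.
have gx0 : s <= g x0.
  apply/ler_addgt0Pr => e he.
  have he2 : 0 < e / 2 by rewrite divr_gt0.
  have hc : 0 < e / (2 * (`|C| + 1)) by rewrite divr_gt0 // mulr_gt0 // ltr_wpDl.
  have [N1 hN1] := exN he2; have [N2 hN2] := hx0 _ hc.
  set p := maxn N1 N2.
  have l1 := hN1 p (leq_maxl _ _); have l2 := hN2 p (leq_maxr _ _).
  have l3 := (hxs p).2.
  have hx0e : x0 = xs p + - (xs p - x0) by rewrite opprB addrC subrK.
  have l4 := gC (xs p - x0).
  have l5 : C * hn (xs p - x0) <= `|C| * hn (xs p - x0).
    by rewrite ler_wpM2r ?hnorm_ge0 // ler_norm.
  have l6 : `|C| * hn (xs p - x0) <= `|C| * (e / (2 * (`|C| + 1))).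
    by rewrite ler_wpM2l // ltW.
  have l7 : `|C| * (e / (2 * (`|C| + 1))) <= e / 2.
    have hC : `|C| + 1 != 0 by rewrite gt_eqF // ltr_wpDl.
    rewrite -subr_ge0 -[X in X - _](mulfK hC) /=.
    have -> : e / 2 * (`|C| + 1) / (`|C| + 1) - `|C| * (e / (2 * (`|C| + 1)))
       = e / 2 / (`|C| + 1) by field; rewrite hC.
    by rewrite divr_ge0 // ?ltW // ltr_wpDl.
  rewrite hx0e gD gN.
  set A := (p.+1%:R : R)^-1 in l1 l3; set B := `|C| * (e / _) in l6 l7.
  set D := C * _ in l4 l5; set E := `|C| * _ in l5 l6. lra.
exists (s%:C *: x0) => y.
rewrite ReZl //.
set a := g y; set b := Re (ip x0 y); set c := Q y.
have hc0 : 0 <= c by apply: Q_ge0.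
set d := a - s * b.
set t := d / (s * c + 1).
have hsc : 0 < s * c + 1 by rewrite ltr_wpDl // mulr_ge0 // ltW.
have htd : t * (s * c + 1) = d by rewrite /t mulfVK // gt_eqF.
have hv := gle (x0 + t%:C *: y).
rewrite gD gZ in hv.
have hb := hn_bound (x0 + t%:C *: y).
rewrite (QD hH) (QZ hH) (ReZr hH) -/b -/c in hb.
have hv2 : g x0 + t * a <= s * ((1 + (Q x0 + 2 * (t * b) + t ^+ 2 * c)) / 2).
  by apply: (le_trans hv); rewrite ler_wpM2l // ltW.
have h3 : t * d <= s * c * t ^+ 2 / 2.
  have : s * ((1 + (Q x0 + 2 * (t * b) + t ^+ 2 * c)) / 2) <= s * ((2 + 2 * (t * b) + t ^+ 2 * c) / 2).
    rewrite ler_pM2l //; set w1 := t * b; set w2 := t ^+ 2 * c; lra.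
  have E1 : s * ((2 + 2 * (t * b) + t ^+ 2 * c) / 2) = s + t * (s * b) + s * c * t ^+ 2 / 2.
    by field.
  have E2 : t * d = t * a - t * (s * b) by rewrite /d mulrBr.
  rewrite E1 => h4; rewrite E2.
  set u1 := s * ((1 + _) / 2) in hv2 h4; set u2 := t * (s * b) in E1 h4 *.
  set u3 := s * c * t ^+ 2 / 2 in E1 h4 *; set u4 := t * a in hv2 *.
  lra.
have ht0 : t = 0.
  rewrite -htd in h3.
  have : t ^+ 2 * (s * c / 2 + 1) <= 0 by nra.
  have hpos : 0 < s * c / 2 + 1 by rewrite ltr_wpDl // divr_ge0 // mulr_ge0 // ltW.
  rewrite pmulr_lle0 // => ht2.
  by apply/eqP; rewrite -sqrf_eq0 eq_le ht2 sqr_ge0.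
have : d = 0 by rewrite -htd ht0 mul0r.
rewrite /d => /eqP; rewrite subr_eq0 => /eqP ->.
by [].
Qed.
End Riesz.
End p5.
Import p5.

Section Main.
Variables (R : realType) (H : lmodType R[i]) (ip : H -> H -> R[i]).
Hypothesis hH : is_hilbert ip.
Variable K : (nat -> nat) -> H -> H.
Hypothesis hK : unitary_rep ip K.
Hypothesis hc : rep_continuous ip K.
Variable n : nat.
Local Notation Re := complex.Re.
Local Notation Im := complex.Im.
Local Notation hn := (hnorm ip).

Definition u xi eta (m : nat) : R := Re (ip (K (sigma n m) xi) eta).

Lemma conv xi eta : exists l, rcvg (u xi eta) l.
Proof.
apply: rcvg_cauchy => e he.
set S := hn xi + hn eta.
have hS : 0 <= S by rewrite addr_ge0 // hnorm_ge0.
have hcp : 0 < e / (4 * (S + 1)) by rewrite divr_gt0 // mulr_gt0 // ltr_wpDl.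
have [k hk] := est hH hK n xi eta hc hcp.
exists k => p q hp hq.
have h1 := hk p (p + q + k)%N hp ltac:(lia).
have h2 := hk q (p + q + k)%N hq ltac:(lia).
rewrite -/S in h1 h2.
have h3 : e / (4 * (S + 1)) * S <= e / 4.
  have hS1 : S + 1 != 0 by rewrite gt_eqF // ltr_wpDl.
  rewrite -subr_ge0.
  have -> : e / 4 - e / (4 * (S + 1)) * S = e / 4 / (S + 1) by field; rewrite hS1.
  by apply: divr_ge0; lra.
move: h1 h2; rewrite /u.
set A := Re (ip (K (sigma n (p + q + k)) xi) eta).
set B := Re (ip (K (sigma n p) xi) eta).
set D := Re (ip (K (sigma n q) xi) eta).
set c := e / _ in h3 *.
set w := c * S in h3 *.
rewrite !ler_norml ltr_norml => /andP[? ?] /andP[? ?]; apply/andP; split; lra.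
Qed.

Definition gl xi eta : R := epsilon (inhabits 0) (rcvg (u xi eta)).
Lemma glP xi eta : rcvg (u xi eta) (gl xi eta).
Proof. exact: epsilon_spec (conv xi eta). Qed.

Lemma gl_riesz xi : exists z, forall y, gl xi y = Re (ip z y).
Proof.
apply: (riesz hH (C := hn xi)).
- move=> y1 y2; apply: (rcvg_uniq (glP xi (y1 + y2))).
  have := rcvg_lin 1 1 (glP xi y1) (glP xi y2); rewrite !mul1r.
  by apply: rcvg_ext => m; rewrite /u (ipDr hH) ReD !mul1r.
- move=> r y; apply: (rcvg_uniq (glP xi (r%:C *: y))).
  have := rcvg_lin r 0 (glP xi y) (glP xi y); rewrite mul0r addr0.
  by apply: rcvg_ext => m; rewrite /u (ReZr hH) mul0r addr0.
- move=> y; apply: (rcvg_le _ (glP xi y)) => m.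
  by rewrite /u; apply: (le_trans (CS hH _ _)); rewrite (Khn hK _ (sigma_perm n m)).
Qed.

Definition P xi : H := epsilon (inhabits 0) (fun z => forall y, gl xi y = Re (ip z y)).
Lemma PP xi y : rcvg (u xi y) (Re (ip (P xi) y)).
Proof.
have h := epsilon_spec (inhabits (0:H)) _ (gl_riesz xi); rewrite -/(P xi) in h.
by rewrite -h; apply: glP.
Qed.

Lemma Imip a v : Im (ip a v) = Re (ip a ('i%C *: v)).
Proof. by rewrite (ipZr hH) ReM ReJ ImJ Rei Imi; lra. Qed.

Lemma uniqRe a b : (forall y, Re (ip a y) = Re (ip b y)) -> a = b.
Proof.
move=> h; have := h (a - b) => /eqP; rewrite -subr_eq0 -ReN -ReD -(ipNl hH) -(ipDl hH).
move=> /eqP /(Q_eq0 hH) /eqP; by rewrite subr_eq0 => /eqP.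
Qed.

Lemma rcvg_eq (v : nat -> R) l l' : rcvg v l -> l = l' -> rcvg v l'.
Proof. by move=> h <-. Qed.

Lemma PPi xi y : rcvg (fun m => Im (ip (K (sigma n m) xi) y)) (Im (ip (P xi) y)).
Proof.
rewrite Imip; apply: rcvg_ext (PP xi ('i%C *: y)) => m.
by rewrite /u Imip.
Qed.

Lemma Plin : lin_op P.
Proof.
move=> a x y; apply: uniqRe => z.
apply: (rcvg_uniq (PP (a *: x + y) z)).
have h := rcvg_lin 1 1 (rcvg_lin (Re a) (- Im a) (PP x z) (PPi x z)) (PP y z).
apply: (rcvg_eq (rcvg_ext _ h)).
  move=> m; rewrite /u (KD hK _ _ (sigma_perm n m)) (KZ hK _ _ (sigma_perm n m)).
  rewrite (ipDl hH) (ipZl hH) ReD ReM; lra.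
rewrite (ipDl hH) (ipZl hH) ReD ReM; lra.
Qed.

Lemma P0 : P 0 = 0.
Proof.
have := Plin 1 0 0; rewrite !scale1r addr0 => h.
by apply: (addrI (P 0)); rewrite addr0 -h.
Qed.

Lemma PZ a x : P (a *: x) = a *: P x.
Proof. by have := Plin a x 0; rewrite !addr0 P0 addr0. Qed.

Lemma Pbounded : bounded_op ip P.
Proof.
exists 1 => x; rewrite mul1r.
have h : Re (ip (P x) (P x)) <= hn x * hn (P x).
  apply: (rcvg_le _ (PP x (P x))) => m.
  by rewrite /u; apply: (le_trans (CS hH _ _)); rewrite (Khn hK _ (sigma_perm n m)).
have := hnorm_sqr hH (P x); have := hnorm_ge0 ip (P x); have := hnorm_ge0 ip x.
rewrite /p1.Q => g1 g2 g3. nra.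
Qed.

Lemma PsymRe x y : Re (ip (P x) y) = Re (ip x (P y)).
Proof.
rewrite (ReipC hH (P y) x); apply: (rcvg_uniq (PP x y)).
apply: rcvg_ext (PP y x) => m.
rewrite /u (Kadj hK y x (sigma_perm n m) (sigma_inv n m)).
by rewrite (ReipC hH).
Qed.

Lemma Psym x y : ip (P x) y = ip x (P y).
Proof.
apply: complex_ext; first exact: PsymRe.
by rewrite !Imip PsymRe PZ.
Qed.

Lemma normc_le (w : R[i]) : ComplexField.Normc.normc w <= `|Re w| + `|Im w|.
Proof.
case: w => a b /=.
have h0 : 0 <= a ^+ 2 + b ^+ 2 by rewrite addr_ge0 // sqr_ge0.
have hq := sqr_sqrtr h0; have hq0 := sqrtr_ge0 (a ^+ 2 + b ^+ 2).
set q := Num.ExtraDef.sqrtr _ in hq hq0 *.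
have ha := normr_ge0 a; have hb := normr_ge0 b.
rewrite -(real_normK (num_real a)) -(real_normK (num_real b)) in hq.
nra.
Qed.

Lemma ccvg_of (z : nat -> R[i]) l : rcvg (fun m => Re (z m)) (Re l) ->
  rcvg (fun m => Im (z m)) (Im l) -> ccvg z l.
Proof.
move=> h1 h2 e he.
have he2 : 0 < e / 2 by rewrite divr_gt0.
have [N1 hN1] := h1 _ he2; have [N2 hN2] := h2 _ he2.
exists (maxn N1 N2) => m hm.
have a1 := hN1 m (leq_trans (leq_maxl _ _) hm).
have a2 := hN2 m (leq_trans (leq_maxr _ _) hm).
apply: (le_lt_trans (normc_le _)).
rewrite ReD ImD ReN ImN; lra.
Qed.

Lemma wot : wot_cvg ip (fun m => K (sigma n m)) P.
Proof.
move=> xi eta; apply: ccvg_of; first exact: PP.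
exact: PPi.
Qed.
End Main.

Theorem lemma1 (R : realType) (H : lmodType R[i]) (ip : H -> H -> R[i])
  (K : (nat -> nat) -> H -> H) (n : nat) :
  is_hilbert ip -> unitary_rep ip K -> rep_continuous ip K ->
  exists P : H -> H, self_adjoint ip P /\
    wot_cvg ip (fun m => K (sigma n m)) P.
Proof.
move=> hH hK hc; exists (P ip K n); split; last exact: wot.
split; first exact: Plin.
split; first exact: Pbounded.
exact: Psym.
Qed.
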